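(* Let $\mathfrak A$ and $\mathcal A$ be Banach algebras with $\mathcal A$ a Banach $\mathfrak A$-bimodule with compatible actions, and let $\mathcal B=\mathcal A\oplus\mathfrak A^\#$ as defined below. Let ''P'' denote any one of the three properties: module amenable, module approximately amenable, module $w^*$-approximately amenable. Then the following are equivalent: (i) $\mathcal A$ is $\mathfrak A^\#$-module P; (ii) $\mathcal B$ is $\mathfrak A^\#$-module P. If, in addition, $\mathcal A$ is a left or right essential $\mathfrak A$-module, then (i) and (ii) are also equivalent to (iii) $\mathcal A$ is $\mathfrak A$-module P.
   Context: Compatible actions: $\alpha\cdot(ab)=(\alpha\cdot a)b$, $(ab)\cdot\alpha=a(b\cdot\alpha)$. $\mathfrak A^\#=\mathfrak A\oplus\mathbb C$ is the unitization; $\mathcal A$ is an $\mathfrak A^\#$-bimodule via $(\alpha,\lambda)\cdot a=\alpha\cdot a+\lambda a$, $a\cdot(\alpha,\lambda)=a\cdot\alpha+\lambda a$. $\mathcal B=\mathcal A\oplus\mathfrak A^\#$ with product $(a,u)\bullet(b,v)=(ab+av+ub,uv)$ (where $av:=a\cdot v$, $ub:=u\cdot b$) and $\mathfrak A^\#$-actions $u\cdot(a,v)=(u\cdot a,uv)$, $(a,v)\cdot u=(a\cdot u,vu)$; it is a unital Banach algebra and $\mathfrak A^\#$-bimodule with compatible actions. $\mathcal A$ is left essential if $\mathrm{span}\{\alpha\cdot a\}$ is dense in $\mathcal A$ (right similarly). For a Banach algebra $\mathcal C$ that is a Banach $\mathfrak C$-bimodule with compatible actions: a Banach $\mathcal C$-$\mathfrak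 C$-module is a Banach space $X$ which is a Banach $\mathcal C$-bimodule and $\mathfrak C$-bimodule with $\alpha\cdot(c\cdot x)=(\alpha\cdot c)\cdot x$, $c\cdot(\alpha\cdot x)=(c\cdot\alpha)\cdot x$, $c\cdot(x\cdot\alpha)=(c\cdot x)\cdot\alpha$ and analogous right-sided identities; commutative if $\alpha\cdot x=x\cdot\alpha$. $X^*$ has the dual actions. A module derivation $D:\mathcal C\to Y$ is additive, bounded ($\|D(c)\|\le M\|c\|$), with $D(cd)=D(c)\cdot d+c\cdot D(d)$, $D(\alpha\cdot c)=\alpha\cdot D(c)$, $D(c\cdot\alpha)=D(c)\cdot\alpha$. $\mathcal C$ is $\mathfrak C$-module amenable (resp. approximately amenable, resp. $w^*$-approximately amenable) if for every commutative Banach $\mathcal C$-$\mathfrak C$-module $X$ and every module derivation $D:\mathcal C\to X^*$ there is $f\in X^*$ with $D(c)=c\cdot f-f\cdot c$ (resp. a net $(f_i)\subseteq X^*$ with $c\cdot f_i-f_i\cdot c\to D(c)$ in norm, resp. weak$^*$, for all $c$). *)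

(* Defs.v *)
From mathcomp Require Import all_boot all_order all_algebra.
From mathcomp Require Import all_classical all_reals all_analysis.
From mathcomp Require Export complex.
Import numFieldNormedType.Exports.
Import Order.TTheory GRing.Theory Num.Theory.

Set Implicit Arguments.
Unset Strict Implicit.
Unset Printing Implicit Defensive.

Local Open Scope ring_scope.

Section ModuleAmenability.
Context {R : realType}.
Local Notation K := (complex R).

Definition is_dual (X : normedModType K) (f : X -> K) : Prop :=
  (forall (k : K) (x y : X), f (k *: x + y) = k * f x + f y) /\
  exists M : K, forall x : X, `|f x| <= M * `|x|.

Definition bilin (U V W : lmodType K) (m : U -> V -> W) : Prop :=
  (forall (k : K) (u u' : U) (v : V), m (k *: u + u') v = k *: m u v + m u' v) /\
  (forall (k : K) (u : U) (v v' : V), m u (k *: v + v') = k *: m u v + m u v').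

Definition banach_algebra (A : completeNormedModType K) (mul : A -> A -> A) : Prop :=
  ((bilin mul) /\ ((forall a b c : A, mul (mul a b) c = mul a (mul b c))) /\ ((forall a b : A, `|mul a b| <= `|a| * `|b|))).

Definition banach_bimodule (C : lmodType K) (normC : C -> K) (mulC : C -> C -> C)
    (X : normedModType K) (l : C -> X -> X) (r : X -> C -> X) : Prop :=
  ((bilin l) /\ (bilin r) /\ ((forall c x, `|l c x| <= normC c * `|x|)) /\ ((forall c x, `|r x c| <= normC c * `|x|)) /\ ((forall c d x, l (mulC c d) x = l c (l d x))) /\ ((forall c d x, r x (mulC c d) = r (r x c) d)) /\ ((forall c d x, r (l c x) d = l c (r x d)))).

Definition compatible_actions (A C : Type) (mulC : C -> C -> C)
    (l : A -> C -> C) (r : C -> A -> C) : Prop :=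
  (forall alpha a b, l alpha (mulC a b) = mulC (l alpha a) b) /\
  (forall alpha a b, r (mulC a b) alpha = mulC a (r b alpha)).

Definition banach_CA_module
    (C : lmodType K) (normC : C -> K) (mulC : C -> C -> C)
    (A : lmodType K) (normA : A -> K) (mulA : A -> A -> A)
    (lAC : A -> C -> C) (rAC : C -> A -> C)
    (X : normedModType K) (lC : C -> X -> X) (rC : X -> C -> X)
    (lA : A -> X -> X) (rA : X -> A -> X) : Prop :=
  ((banach_bimodule normC mulC lC rC) /\ (banach_bimodule normA mulA lA rA) /\ (
      (forall alpha c x, lA alpha (lC c x) = lC (lAC alpha c) x)) /\ ((forall alpha c x, lC c (lA alpha x) = lC (rAC c alpha) x)) /\ ((forall alpha c x, lC c (rA x alpha) = rA (lC c x) alpha)) /\ (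
      (forall alpha c x, rA (rC x c) alpha = rC x (rAC c alpha))) /\ ((forall alpha c x, rC (rA x alpha) c = rC x (lAC alpha c))) /\ ((forall alpha c x, rC (lA alpha x) c = lA alpha (rC x c)))).

Definition commutative_module (A X : Type) (lA : A -> X -> X) (rA : X -> A -> X) :=
  forall alpha x, lA alpha x = rA x alpha.

(* Module derivation D : C -> X^*.  Elements of X^* are represented as
   functionals X -> K; the dual actions are
     (c.f)(x) = f(x.c),  (f.c)(x) = f(c.x)  (and likewise for A). *)
Definition module_derivation
    (C : lmodType K) (normC : C -> K) (mulC : C -> C -> C)
    (A : Type) (lAC : A -> C -> C) (rAC : C -> A -> C)
    (X : normedModType K) (lC : C -> X -> X) (rC : X -> C -> X)
    (lA : A -> X -> X) (rA : X -> A -> X) (D : C -> X -> K) : Prop :=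
  (((forall c, is_dual (D c))) /\ (
      (forall c d x, D (c + d) x = D c x + D d x)) /\ (
      (exists M : K, forall c x, `|D c x| <= M * normC c * `|x|)) /\ ((* D(cd) = D(c).d + c.D(d) *)
      (forall c d x, D (mulC c d) x = D c (lC d x) + D d (rC x c))) /\ (
      (forall alpha c x, D (lAC alpha c) x = D c (rA x alpha))) /\ (
      (forall alpha c x, D (rAC c alpha) x = D c (lA alpha x)))).

Definition directed (I : Type) (le : I -> I -> Prop) : Prop :=
  ((inhabited I) /\ ((forall i, le i i)) /\ ((forall i j k, le i j -> le j k -> le i k)) /\ ((forall i j, exists k, le i k /\ le j k))).

Inductive amen_kind := Amenable | ApproxAmenable | WStarApproxAmenable.

Definition amen_conclusion (P : amen_kind)
    (C : Type) (X : normedModType K) (lC : C -> X -> X) (rC : X -> C -> X)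
    (D : C -> X -> K) : Prop :=
  match P with
  | Amenable =>
      (* D is inner: D(c) = c.f - f.c *)
      exists f : X -> K, is_dual f /\
        forall c x, D c x = f (rC x c) - f (lC c x)
  | ApproxAmenable =>
      (* a net (f_i) in X^* with c.f_i - f_i.c -> D(c) in (operator) norm *)
      exists (I : Type) (le : I -> I -> Prop) (f : I -> X -> K),
        directed le /\ (forall i, is_dual (f i)) /\
        (forall c (e : K), 0 < e -> exists i0, forall i, le i0 i ->
          forall x, `|f i (rC x c) - f i (lC c x) - D c x| <= e * `|x|)
  | WStarApproxAmenable =>
      (* a net (f_i) in X^* with c.f_i - f_i.c -> D(c) weak-star *)
      exists (I : Type) (le : I -> I -> Prop) (f : I -> X -> K),
        directed le /\ (forall i, is_dual (f i)) /\
        (forall c x (e : K), 0 < e -> exists i0, forall i, le i0 i ->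
          `|f i (rC x c) - f i (lC c x) - D c x| < e)
  end.

Definition module_P (P : amen_kind)
    (C : lmodType K) (normC : C -> K) (mulC : C -> C -> C)
    (A : lmodType K) (normA : A -> K) (mulA : A -> A -> A)
    (lAC : A -> C -> C) (rAC : C -> A -> C) : Prop :=
  forall (X : completeNormedModType K)
         (lC : C -> X -> X) (rC : X -> C -> X)
         (lA : A -> X -> X) (rA : X -> A -> X),
    banach_CA_module normC mulC normA mulA lAC rAC lC rC lA rA ->
    commutative_module lA rA ->
    forall D : C -> X -> K,
      module_derivation normC mulC lAC rAC lC rC lA rA D ->
      amen_conclusion P lC rC D.

Definition unitz (A : normedModType K) : lmodType K := (A * K^o)%type.

Definition unitz_norm (A : normedModType K) (u : unitz A) : K :=
  `|u.1| + `|u.2|.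

Definition unitz_mul (A : normedModType K) (mulA : A -> A -> A)
    (u v : unitz A) : unitz A :=
  (mulA u.1 v.1 + u.2 *: v.1 + v.2 *: u.1, (u.2 : K) * (v.2 : K) : K^o).

Definition unitz_actl (A Ac : normedModType K) (l : A -> Ac -> Ac)
    (u : unitz A) (a : Ac) : Ac := l u.1 a + u.2 *: a.
Definition unitz_actr (A Ac : normedModType K) (r : Ac -> A -> Ac)
    (a : Ac) (u : unitz A) : Ac := r a u.1 + u.2 *: a.

Definition Bsp (A Ac : normedModType K) : lmodType K := (Ac * unitz A)%type.

Definition B_norm (A Ac : normedModType K) (w : Bsp A Ac) : K :=
  `|w.1| + unitz_norm w.2.

Definition B_mul (A Ac : normedModType K) (mulA : A -> A -> A)
    (mulAc : Ac -> Ac -> Ac) (l : A -> Ac -> Ac) (r : Ac -> A -> Ac)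
    (w z : Bsp A Ac) : Bsp A Ac :=
  (mulAc w.1 z.1 + unitz_actr r w.1 z.2 + unitz_actl l w.2 z.1,
   unitz_mul mulA w.2 z.2).

Definition B_actl (A Ac : normedModType K) (mulA : A -> A -> A)
    (l : A -> Ac -> Ac) (u : unitz A) (w : Bsp A Ac) : Bsp A Ac :=
  (unitz_actl l u w.1, unitz_mul mulA u w.2).
Definition B_actr (A Ac : normedModType K) (mulA : A -> A -> A)
    (r : Ac -> A -> Ac) (w : Bsp A Ac) (u : unitz A) : Bsp A Ac :=
  (unitz_actr r w.1 u, unitz_mul mulA w.2 u).

Definition left_essential (A Ac : normedModType K) (l : A -> Ac -> Ac) : Prop :=
  forall (a : Ac) (e : K), 0 < e ->
    exists (n : nat) (lam : 'I_n -> K) (al : 'I_n -> A) (b : 'I_n -> Ac),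
      `|a - \sum_(i < n) lam i *: l (al i) (b i)| < e.
Definition right_essential (A Ac : normedModType K) (r : Ac -> A -> Ac) : Prop :=
  forall (a : Ac) (e : K), 0 < e ->
    exists (n : nat) (lam : 'I_n -> K) (al : 'I_n -> A) (b : 'I_n -> Ac),
      `|a - \sum_(i < n) lam i *: r (b i) (al i)| < e.

End ModuleAmenability.

(* Main.v *)
Require Import Defs.
From mathcomp Require Import all_boot all_order all_algebra.
From mathcomp Require Import all_classical all_reals all_analysis.
From mathcomp Require Import complex.
From mathcomp Require Import ring.
Import numFieldNormedType.Exports.
Import Order.TTheory GRing.Theory Num.Theory.
Local Open Scope ring_scope.
Set Implicit Arguments. Unset Strict Implicit. Unset Printing Implicit Defensive.

Section Gen.
Variable R : realType.
Local Notation K := (complex R).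

Lemma bilin_l0 (U V W : lmodType K) (m : U -> V -> W) : bilin m -> forall v, m 0 v = 0.
Proof.
case=> H _ v; have := H (-1) 0 0 v.
by rewrite scaler0 addr0 scaleN1r addNr.
Qed.
Lemma bilin_r0 (U V W : lmodType K) (m : U -> V -> W) : bilin m -> forall u, m u 0 = 0.
Proof.
case=> _ H u; have := H (-1) u 0 0.
by rewrite scaler0 addr0 scaleN1r addNr.
Qed.
Lemma bilin_lD (U V W : lmodType K) (m : U -> V -> W) : bilin m ->
  forall u u' v, m (u + u') v = m u v + m u' v.
Proof. move=> H u u' v; have := H.1 1 u u' v; by rewrite !scale1r. Qed.
Lemma bilin_rD (U V W : lmodType K) (m : U -> V -> W) : bilin m ->
  forall u v v', m u (v + v') = m u v + m u v'.
Proof. move=> H u v v'; have := H.2 1 u v v'; by rewrite !scale1r. Qed.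
Lemma bilin_lZ (U V W : lmodType K) (m : U -> V -> W) : bilin m ->
  forall k u v, m (k *: u) v = k *: m u v.
Proof. move=> H k u v; have := H.1 k u 0 v; by rewrite !addr0 (bilin_l0 H) addr0. Qed.
Lemma bilin_rZ (U V W : lmodType K) (m : U -> V -> W) : bilin m ->
  forall k u v, m u (k *: v) = k *: m u v.
Proof. move=> H k u v; have := H.2 k u v 0; by rewrite !addr0 (bilin_r0 H) addr0. Qed.
Lemma bilin_lB (U V W : lmodType K) (m : U -> V -> W) : bilin m ->
  forall u u' v, m (u - u') v = m u v - m u' v.
Proof. move=> H u u' v; by rewrite bilin_lD // -scaleN1r bilin_lZ // scaleN1r. Qed.
Lemma bilin_rB (U V W : lmodType K) (m : U -> V -> W) : bilin m ->
  forall u v v', m u (v - v') = m u v - m u v'.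
Proof. move=> H u v v'; by rewrite bilin_rD // -scaleN1r bilin_rZ // scaleN1r. Qed.

Lemma dualD (X : normedModType K) (f : X -> K) : is_dual f -> forall x y, f (x + y) = f x + f y.
Proof. case=> H _ x y; have := H 1 x y; by rewrite scale1r mul1r. Qed.
Lemma dual0 (X : normedModType K) (f : X -> K) : is_dual f -> f 0 = 0.
Proof. case=> H _; have := H (-1) 0 0; by rewrite scaler0 addr0 mulN1r addNr. Qed.
Lemma dualZ (X : normedModType K) (f : X -> K) : is_dual f -> forall k x, f (k *: x) = k * f x.
Proof. move=> H k x; have := H.1 k x 0; by rewrite !addr0 (dual0 H) addr0. Qed.
Lemma dualB (X : normedModType K) (f : X -> K) : is_dual f -> forall x y, f (x - y) = f x - f y.
Proof. move=> H x y; by rewrite dualD // -scaleN1r dualZ // mulN1r. Qed.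

Lemma dualN (X : normedModType K) (f : X -> K) : is_dual f -> forall x, f (- x) = - f x.
Proof. move=> H x; by rewrite -scaleN1r dualZ // mulN1r. Qed.

Lemma bound_abs (M a b : K) : 0 <= a -> 0 <= b -> a <= M * b -> a <= `|M| * b.
Proof.
move=> a0 b0 h; have Mb0 : 0 <= M * b by apply: le_trans h.
by rewrite -(ger0_norm b0) -normrM ger0_norm.
Qed.

Lemma dual_bound (X : normedModType K) (f : X -> K) : is_dual f ->
  exists M : K, 0 <= M /\ forall x, `|f x| <= M * `|x|.
Proof.
case=> _ [M HM]; exists `|M|; split => // x.
by apply: bound_abs => //; apply: HM.
Qed.

Lemma small0 (z : K) : (forall e : K, 0 < e -> `|z| <= e) -> z = 0.
Proof.
move=> H; apply/eqP; rewrite -normr_eq0; apply/negPn/negP => hz.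
have zp : 0 < `|z| by rewrite lt_def hz normr_ge0.
have := H (`|z| / 2%:R); rewrite divr_gt0 // ?ltr0n // => /(_ isT).
rewrite ler_pdivlMr ?ltr0n // mulr_natr mulr2n -{3}(addr0 `|z|) lerD2l => h0.
by have := lt_le_trans zp h0; rewrite ltxx.
Qed.

Lemma norm5 (V : normedModType K) (a b c d e : V) :
  `|a - b - c + d + e| <= `|a| + `|b| + `|c| + `|d| + `|e|.
Proof.
apply: le_trans (ler_normD _ _) _; rewrite lerD2r.
apply: le_trans (ler_normD _ _) _; rewrite lerD2r.
apply: le_trans (ler_normB _ _) _; rewrite lerD2r.
exact: ler_normB.
Qed.
End Gen.

Section Main.
Variable R : realType.
Local Notation K := (complex R).
Variables (A : completeNormedModType K) (mulA : A -> A -> A)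
    (Ac : completeNormedModType K) (mulAc : Ac -> Ac -> Ac)
    (l : A -> Ac -> Ac) (r : Ac -> A -> Ac).
Hypotheses (hA : banach_algebra mulA) (hAc : banach_algebra mulAc)
    (hmod : banach_bimodule Num.norm mulA l r).

Let bmA : bilin mulA := hA.1.
Let bmAc : bilin mulAc := hAc.1.
Let bl : bilin l := hmod.1.
Let br : bilin r := hmod.2.1.

Definition inA (a : Ac) : Bsp A Ac := (a, 0).
Definition eB : Bsp A Ac := (0, ((0 : A), (1 : K^o))).
Definition inU (u : unitz A) : Bsp A Ac := (0, u).

Lemma umul_r0 u : unitz_mul mulA u 0 = 0.
Proof. rewrite /unitz_mul /= (bilin_r0 bmA) scaler0 scale0r !addr0 mulr0. by []. Qed.
Lemma umul_0l u : unitz_mul mulA 0 u = 0.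
Proof. rewrite /unitz_mul /= (bilin_l0 bmA) scaler0 scale0r !addr0 mul0r. by []. Qed.
Lemma umul00 a b : unitz_mul mulA (a, 0) (b, 0) = (mulA a b, 0).
Proof. by rewrite /unitz_mul /= !scale0r !addr0 mulr0. Qed.
Lemma uactl_0r u : unitz_actl l u 0 = 0.
Proof. by rewrite /unitz_actl (bilin_r0 bl) scaler0 addr0. Qed.
Lemma uactr_0l u : unitz_actr r 0 u = 0.
Proof. by rewrite /unitz_actr (bilin_l0 br) scaler0 addr0. Qed.
Lemma uactl_0l c : unitz_actl l 0 c = 0.
Proof. by rewrite /unitz_actl (bilin_l0 bl) scale0r addr0. Qed.
Lemma uactr_0r c : unitz_actr r c 0 = 0.
Proof. by rewrite /unitz_actr (bilin_r0 br) scale0r addr0. Qed.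

Lemma Bmul_inA a b : B_mul mulA mulAc l r (inA a) (inA b) = inA (mulAc a b).
Proof. by rewrite /B_mul /= uactr_0r uactl_0l !addr0 umul_r0. Qed.
Lemma Bmul_eA a : B_mul mulA mulAc l r eB (inA a) = inA a.
Proof.
rewrite /B_mul /= (bilin_l0 bmAc) uactr_0l umul_r0 /unitz_actl /= (bilin_l0 bl) scale1r.
by rewrite add0r !add0r.
Qed.
Lemma Bmul_Ae a : B_mul mulA mulAc l r (inA a) eB = inA a.
Proof.
rewrite /B_mul /= (bilin_r0 bmAc) uactl_0r umul_0l /unitz_actr /= (bilin_r0 br) scale1r.
by rewrite !add0r !addr0.
Qed.
Lemma Bmul_ee : B_mul mulA mulAc l r eB eB = eB.
Proof.
rewrite /B_mul /= (bilin_r0 bmAc) uactl_0r uactr_0l !addr0.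
by rewrite /unitz_mul /= (bilin_r0 bmA) !scaler0 !addr0 mulr1.
Qed.
Lemma Bactl_e u : B_actl mulA l u eB = inU u.
Proof.
rewrite /B_actl /= uactl_0r /unitz_mul /= (bilin_r0 bmA) scaler0 scale1r !add0r mulr1.
by case: u.
Qed.
Lemma Bactr_e u : B_actr mulA r eB u = inU u.
Proof.
rewrite /B_actr /= uactr_0l /unitz_mul /= (bilin_l0 bmA) scaler0 scale1r add0r addr0 mul1r.
by case: u.
Qed.
Lemma Bactl_inA u a : B_actl mulA l u (inA a) = inA (unitz_actl l u a).
Proof. by rewrite /B_actl /= umul_r0. Qed.
Lemma Bactr_inA u a : B_actr mulA r (inA a) u = inA (unitz_actr r a u).
Proof. by rewrite /B_actr /= umul_0l. Qed.
Lemma Bdec (w : Bsp A Ac) : w = inA w.1 + inU w.2.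
Proof. by case: w => a u; rewrite /inA /inU; congr (_,_); rewrite /= ?addr0 ?add0r. Qed.


Lemma inA_lin k a b : inA (k *: a + b) = k *: inA a + inA b.
Proof. by rewrite /inA; congr (_,_); rewrite /= scaler0 addr0. Qed.
Lemma inA_add a b : inA (a + b) = inA a + inA b.
Proof. by rewrite /inA; congr (_,_); rewrite /= addr0. Qed.
Lemma Bnorm_inA a : B_norm (inA a) = `|a|.
Proof. by rewrite /B_norm /unitz_norm /= !normr0 !addr0. Qed.
Lemma Bnorm_e : B_norm eB = 1.
Proof. by rewrite /B_norm /unitz_norm /= !normr0 normr1 !add0r. Qed.

Section Fwd.
Variables (X : completeNormedModType K) (lB : Bsp A Ac -> X -> X) (rB : X -> Bsp A Ac -> X)
  (lA : unitz A -> X -> X) (rA : X -> unitz A -> X).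
Hypothesis hX : banach_CA_module (B_norm (A:=A) (Ac:=Ac)) (B_mul mulA mulAc l r)
       (unitz_norm (A:=A)) (unitz_mul mulA) (B_actl mulA l) (B_actr mulA r) lB rB lA rA.
Hypothesis hcom : commutative_module lA rA.
Variable D : Bsp A Ac -> X -> K.
Hypothesis hD : module_derivation (B_norm (A:=A) (Ac:=Ac)) (B_mul mulA mulAc l r)
       (B_actl mulA l) (B_actr mulA r) lB rB lA rA D.

Let blB : bilin lB := hX.1.1.
Let brB : bilin rB := hX.1.2.1.
Let nlB := hX.1.2.2.1.
Let nrB := hX.1.2.2.2.1.
Let mlB := hX.1.2.2.2.2.1.
Let mrB := hX.1.2.2.2.2.2.1.
Let midB := hX.1.2.2.2.2.2.2.
Let c1 := hX.2.2.1.
Let c2 := hX.2.2.2.1.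
Let c3 := hX.2.2.2.2.1.
Let c4 := hX.2.2.2.2.2.1.
Let c5 := hX.2.2.2.2.2.2.1.
Let c6 := hX.2.2.2.2.2.2.2.
Let dD := hD.1.
Let aD := hD.2.1.
Let bD := hD.2.2.1.
Let mD := hD.2.2.2.1.
Let alD := hD.2.2.2.2.1.
Let arD := hD.2.2.2.2.2.

Lemma hXA : banach_CA_module Num.norm mulAc (unitz_norm (A:=A)) (unitz_mul mulA)
   (unitz_actl l) (unitz_actr r) (fun a x => lB (inA a) x) (fun x a => rB x (inA a)) lA rA.
Proof.
split; [|split; [exact: hX.2.1|]].
  split; [split => *; [by rewrite inA_lin blB.1 | exact: blB.2]|].
  split; [split => *; [exact: brB.1 | by rewrite inA_lin brB.2]|].
  split; [by move=> c x; rewrite -Bnorm_inA; apply: nlB|].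
  split; [by move=> c x; rewrite -Bnorm_inA; apply: nrB|].
  split; [by move=> c d x; rewrite -Bmul_inA mlB|].
  split; [by move=> c d x; rewrite -Bmul_inA mrB|].
  by move=> c d x; rewrite midB.
split; [by move=> al c x; rewrite c1 Bactl_inA|].
split; [by move=> al c x; rewrite c2 Bactr_inA|].
split; [by move=> al c x; rewrite c3|].
split; [by move=> al c x; rewrite c4 Bactr_inA|].
split; [by move=> al c x; rewrite c5 Bactl_inA|].
by move=> al c x; rewrite c6.
Qed.

Lemma hDA : module_derivation Num.norm mulAc (unitz_actl l) (unitz_actr r)
   (fun a x => lB (inA a) x) (fun x a => rB x (inA a)) lA rA (fun a => D (inA a)).
Proof.
split; [by move=> c; exact: dD|].
split; [by move=> c d x; rewrite inA_add aD|].
split; [by case: bD => M HM; exists M => c x; rewrite -Bnorm_inA; apply: HM|].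
split; [by move=> c d x; rewrite -Bmul_inA mD|].
split; [by move=> al c x; rewrite -Bactl_inA alD|].
by move=> al c x; rewrite -Bactr_inA arD.
Qed.

Local Notation P x := (lB eB x).
Local Notation Q x := (rB x eB).
Local Notation De := (D eB).

Lemma PP x : P (P x) = P x. Proof. by rewrite -mlB Bmul_ee. Qed.
Lemma QQ x : Q (Q x) = Q x. Proof. by rewrite -mrB Bmul_ee. Qed.
Lemma QP x : Q (P x) = P (Q x). Proof. by rewrite midB. Qed.
Lemma RQ a x : rB (Q x) (inA a) = rB x (inA a). Proof. by rewrite -mrB Bmul_eA. Qed.
Lemma LP a x : lB (inA a) (P x) = lB (inA a) x. Proof. by rewrite -mlB Bmul_Ae. Qed.
Lemma QR a x : Q (rB x (inA a)) = rB x (inA a). Proof. by rewrite -mrB Bmul_Ae. Qed.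
Lemma PL a x : P (lB (inA a) x) = lB (inA a) x. Proof. by rewrite -mlB Bmul_eA. Qed.
Lemma PR a x : P (rB x (inA a)) = rB (P x) (inA a). Proof. by rewrite midB. Qed.
Lemma QL a x : Q (lB (inA a) x) = lB (inA a) (Q x). Proof. by rewrite midB. Qed.
Lemma De_split x : De x = De (P x) + De (Q x).
Proof. by rewrite -mD Bmul_ee. Qed.
Lemma De_PQ x : De (P (Q x)) = 0.
Proof.
have := De_split (P (Q x)); rewrite PP QP QQ.
move/(congr1 (fun t => t - De (P (Q x)))); rewrite subrr addrK => h; by rewrite -h.
Qed.
Lemma DL a z : De (lB (inA a) z) = D (inA a) z - D (inA a) (Q z).
Proof. by have := mD eB (inA a) z; rewrite Bmul_eA => ->; rewrite addrK. Qed.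
Lemma DR a z : De (rB z (inA a)) = D (inA a) z - D (inA a) (P z).
Proof. by have := mD (inA a) eB z; rewrite Bmul_Ae => ->; rewrite addrC addKr. Qed.
Lemma DU u x : D (inU u) x = De (rA x u).
Proof. by rewrite -Bactl_e alD. Qed.
Lemma RU u x : rB x (inU u) = Q (rA x u).
Proof. by rewrite c5 Bactl_e. Qed.
Lemma LU u x : lB (inU u) x = P (rA x u).
Proof. by rewrite c3 -hcom c1 Bactl_e. Qed.


Definition Ff (f : X -> K) (x : X) : K :=
  f (x - P x - Q x + P (Q x) + P (Q x)) + De (Q x - P x).

Lemma Fexp f : is_dual f -> forall x, Ff f x =
  f x - f (P x) - f (Q x) + f (P (Q x)) + f (P (Q x)) + De (Q x) - De (P x).
Proof.
move=> Hf x; rewrite /Ff !(dualD Hf, dualN Hf) (dualB (dD eB)). ring.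
Qed.

Lemma nP y : `|P y| <= `|y|.
Proof. by have := nlB eB y; rewrite Bnorm_e mul1r. Qed.
Lemma nQ y : `|Q y| <= `|y|.
Proof. by have := nrB eB y; rewrite Bnorm_e mul1r. Qed.

Lemma P_lin k x y : P (k *: x + y) = k *: P x + P y. Proof. exact: blB.2. Qed.
Lemma Q_lin k x y : Q (k *: x + y) = k *: Q x + Q y. Proof. exact: brB.1. Qed.

Lemma F_lin f : is_dual f -> forall k x y, Ff f (k *: x + y) = k * Ff f x + Ff f y.
Proof.
move=> Hf k x y; rewrite !Fexp //.
rewrite !(P_lin, Q_lin) !(dualD Hf, dualZ Hf) !(dualD (dD eB), dualZ (dD eB)); ring.
Qed.

Lemma F_dual f : is_dual f -> is_dual (Ff f).
Proof.
move=> Hf; split; first exact: F_lin.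
have [Mf [Mf0 HMf]] := dual_bound Hf.
have [MD [MD0 HMD]] := dual_bound (dD eB).
exists (Mf * 5%:R + MD * 2%:R) => x.
have hv : `|x - P x - Q x + P (Q x) + P (Q x)| <= `|x| + `|x| + `|x| + `|x| + `|x|.
  apply: le_trans (norm5 _ _ _ _ _) _.
  have nPQ : `|P (Q x)| <= `|x| by apply: le_trans (nP _) (nQ _).
  by repeat apply: lerD => //; rewrite ?nP ?nQ.
have hw : `|Q x - P x| <= `|x| + `|x|.
  by apply: le_trans (ler_normB _ _) _; apply: lerD; rewrite ?nP ?nQ.
rewrite /Ff; apply: le_trans (ler_normD _ _) _.
have -> : (Mf * 5%:R + MD * 2%:R) * `|x| =
   Mf * (`|x| + `|x| + `|x| + `|x| + `|x|) + MD * (`|x| + `|x|) by ring.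
apply: lerD.
  by apply: le_trans (HMf _) _; apply: ler_wpM2l.
by apply: le_trans (HMD _) _; apply: ler_wpM2l.
Qed.

Lemma adFe f z : is_dual f -> Ff f (Q z) - Ff f (P z) = De z.
Proof.
move=> Hf; rewrite !Fexp // ?QQ ?QP ?PP ?QQ (De_split z) ?De_PQ; ring.
Qed.

Lemma adFa f a x : is_dual f ->
  Ff f (rB x (inA a)) - Ff f (lB (inA a) x) - D (inA a) x =
  - (f (rB (x - P x - Q x) (inA a)) - f (lB (inA a) (x - P x - Q x))
     - D (inA a) (x - P x - Q x)).
Proof.
move=> Hf; rewrite !Fexp //.
rewrite (bilin_lB brB) (bilin_lB brB) (bilin_rB blB) (bilin_rB blB).
rewrite !(dualB Hf) !(dualB (dD (inA a))).
rewrite !(QR, PL, PR, QL, RQ, LP, PP, QQ, QP).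
rewrite !(DR, DL) !(PP, QQ).
ring.
Qed.

Lemma lB_add w1 w2 x : lB (w1 + w2) x = lB w1 x + lB w2 x. Proof. by have := blB.1 1 w1 w2 x; rewrite !scale1r. Qed.
Lemma rB_add w1 w2 x : rB x (w1 + w2) = rB x w1 + rB x w2. Proof. by have := brB.2 1 x w1 w2; rewrite !scale1r. Qed.

Lemma errF f w x : is_dual f ->
  Ff f (rB x w) - Ff f (lB w x) - D w x =
  - (f (rB (x - P x - Q x) (inA w.1)) - f (lB (inA w.1) (x - P x - Q x))
     - D (inA w.1) (x - P x - Q x)).
Proof.
move=> Hf; rewrite {1 2 3}(Bdec w) lB_add rB_add aD !(dualD (F_dual Hf)).
rewrite RU LU DU -(adFa _ _ Hf) -(adFe _ Hf); ring.
Qed.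

Lemma ny x : `|x - P x - Q x| <= `|x| + `|x| + `|x|.
Proof.
apply: le_trans (ler_normB _ _) _; apply: lerD; last exact: nQ.
apply: le_trans (ler_normB _ _) _; apply: lerD => //; exact: nP.
Qed.

Lemma concl_fwd Pk : amen_conclusion Pk (fun a x => lB (inA a) x) (fun x a => rB x (inA a))
   (fun a => D (inA a)) -> amen_conclusion Pk lB rB D.
Proof.
case: Pk => /=.
- case=> f [Hf Hfe]; exists (Ff f); split; first exact: F_dual.
  move=> w x; have := errF w x Hf; rewrite (Hfe w.1 (x - P x - Q x)) subrr oppr0.
  by move/eqP; rewrite subr_eq0 => /eqP ->.
- case=> I [le [f [Hdir [Hf Hc]]]]; exists I, le, (fun i => Ff (f i)).
  split => //; split; first by move=> i; exact: F_dual.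
  move=> w e e0.
  have e30 : 0 < e / 3%:R by rewrite divr_gt0 // ltr0n.
  have [i0 Hi0] := Hc w.1 _ e30; exists i0 => i Hi x.
  rewrite errF // normrN; apply: le_trans (Hi0 i Hi _) _.
  have -> : e * `|x| = e / 3%:R * (`|x| + `|x| + `|x|).
    by field.
  apply: ler_wpM2l; first exact: ltW.
  exact: ny.
- case=> I [le [f [Hdir [Hf Hc]]]]; exists I, le, (fun i => Ff (f i)).
  split => //; split; first by move=> i; exact: F_dual.
  move=> w x e e0; have [i0 Hi0] := Hc w.1 (x - P x - Q x) _ e0; exists i0 => i Hi.
  by rewrite errF // normrN; apply: Hi0.
Qed.

End Fwd.

Lemma P1_fwd Pk : module_P Pk Num.norm mulAc (unitz_norm (A:=A)) (unitz_mul mulA)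
       (unitz_actl l) (unitz_actr r) ->
   module_P Pk (B_norm (A:=A) (Ac:=Ac)) (B_mul mulA mulAc l r)
       (unitz_norm (A:=A)) (unitz_mul mulA) (B_actl mulA l) (B_actr mulA r).
Proof.
move=> H X lB rB lA rA hX hcom D hD.
apply: (concl_fwd hX hcom hD).
apply: H => //; [exact: hXA | exact: hDA].
Qed.

Lemma concl_sub Pk (C C' : Type) (X : normedModType K) (lC : C -> X -> X) rC D
   (lC' : C' -> X -> X) rC' D' (g : C -> C') :
   (forall c x, lC' (g c) x = lC c x) -> (forall c x, rC' x (g c) = rC x c) ->
   (forall c x, D' (g c) x = D c x) ->
   amen_conclusion Pk lC' rC' D' -> amen_conclusion Pk lC rC D.
Proof.
move=> hl hr hd; case: Pk => /=.
- by case=> f [Hf H]; exists f; split => // c x; rewrite -hd -hl -hr.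
- case=> I [le [f [Hdir [Hf H]]]]; exists I, le, f; do 2 split => //.
  move=> c e e0; have [i0 Hi] := H (g c) e e0; exists i0 => i Hii x.
  by rewrite -hd -hl -hr; apply: Hi.
- case=> I [le [f [Hdir [Hf H]]]]; exists I, le, f; do 2 split => //.
  move=> c x e e0; have [i0 Hi] := H (g c) x e e0; exists i0 => i Hii.
  by rewrite -hd -hl -hr; apply: Hi.
Qed.


Section Bwd.
Variables (X : completeNormedModType K) (lC : Ac -> X -> X) (rC : X -> Ac -> X)
  (lA : unitz A -> X -> X) (rA : X -> unitz A -> X).
Hypothesis hX : banach_CA_module Num.norm mulAc (unitz_norm (A:=A)) (unitz_mul mulA)
   (unitz_actl l) (unitz_actr r) lC rC lA rA.
Hypothesis hcom : commutative_module lA rA.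
Variable D : Ac -> X -> K.
Hypothesis hD : module_derivation Num.norm mulAc (unitz_actl l) (unitz_actr r)
   lC rC lA rA D.

Let blC : bilin lC := hX.1.1.
Let brC : bilin rC := hX.1.2.1.
Let nlC := hX.1.2.2.1.
Let nrC := hX.1.2.2.2.1.
Let mlC := hX.1.2.2.2.2.1.
Let mrC := hX.1.2.2.2.2.2.1.
Let midC := hX.1.2.2.2.2.2.2.
Let blA : bilin lA := hX.2.1.1.
Let brA : bilin rA := hX.2.1.2.1.
Let nlA := hX.2.1.2.2.1.
Let nrA := hX.2.1.2.2.2.1.
Let mlA := hX.2.1.2.2.2.2.1.
Let mrA := hX.2.1.2.2.2.2.2.1.
Let midA := hX.2.1.2.2.2.2.2.2.
Let c1 := hX.2.2.1.
Let c2 := hX.2.2.2.1.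
Let c3 := hX.2.2.2.2.1.
Let c4 := hX.2.2.2.2.2.1.
Let c5 := hX.2.2.2.2.2.2.1.
Let c6 := hX.2.2.2.2.2.2.2.
Let dD := hD.1.
Let aD := hD.2.1.
Let bD := hD.2.2.1.
Let mD := hD.2.2.2.1.
Let alD := hD.2.2.2.2.1.
Let arD := hD.2.2.2.2.2.

Lemma Bmul1 (w z : Bsp A Ac) : (B_mul mulA mulAc l r w z).1 =
  mulAc w.1 z.1 + unitz_actr r w.1 z.2 + unitz_actl l w.2 z.1. Proof. by []. Qed.
Lemma Bmul2 (w z : Bsp A Ac) : (B_mul mulA mulAc l r w z).2 = unitz_mul mulA w.2 z.2.
Proof. by []. Qed.
Lemma Bactl1 u (w : Bsp A Ac) : (B_actl mulA l u w).1 = unitz_actl l u w.1. Proof. by []. Qed.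
Lemma Bactl2 u (w : Bsp A Ac) : (B_actl mulA l u w).2 = unitz_mul mulA u w.2. Proof. by []. Qed.
Lemma Bactr1 u (w : Bsp A Ac) : (B_actr mulA r w u).1 = unitz_actr r w.1 u. Proof. by []. Qed.
Lemma Bactr2 u (w : Bsp A Ac) : (B_actr mulA r w u).2 = unitz_mul mulA w.2 u. Proof. by []. Qed.

Definition lBb (w : Bsp A Ac) (x : X) : X := lC w.1 x + lA w.2 x.
Definition rBb (x : X) (w : Bsp A Ac) : X := rC x w.1 + rA x w.2.

Lemma lC_D a b x : lC (a + b) x = lC a x + lC b x.
Proof. by have := blC.1 1 a b x; rewrite !scale1r. Qed.
Lemma lC_Dr a x y : lC a (x + y) = lC a x + lC a y.
Proof. by have := blC.2 1 a x y; rewrite !scale1r. Qed.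
Lemma rC_D a b x : rC x (a + b) = rC x a + rC x b.
Proof. by have := brC.2 1 x a b; rewrite !scale1r. Qed.
Lemma rC_Dl a x y : rC (x + y) a = rC x a + rC y a.
Proof. by have := brC.1 1 x y a; rewrite !scale1r. Qed.
Lemma lA_Dr a x y : lA a (x + y) = lA a x + lA a y.
Proof. by have := blA.2 1 a x y; rewrite !scale1r. Qed.
Lemma rA_Dl a x y : rA (x + y) a = rA x a + rA y a.
Proof. by have := brA.1 1 x y a; rewrite !scale1r. Qed.

Lemma hXB : banach_CA_module (B_norm (A:=A) (Ac:=Ac)) (B_mul mulA mulAc l r)
       (unitz_norm (A:=A)) (unitz_mul mulA) (B_actl mulA l) (B_actr mulA r) lBb rBb lA rA.
Proof.
split; [|split; [exact: hX.2.1|]].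
  split.
    split => k u u' v; rewrite /lBb.
      rewrite [(k *: u + u').1]/= [(k *: u + u').2]/= blC.1 blA.1 scalerDr addrACA //.
    by rewrite blC.2 blA.2 scalerDr addrACA.
  split.
    split => k u u' v; rewrite /rBb.
      by rewrite brC.1 brA.1 scalerDr addrACA.
    rewrite [(k *: u' + v).1]/= [(k *: u' + v).2]/= brC.2 brA.2 scalerDr addrACA //.
  split.
    move=> c x; rewrite /lBb /B_norm mulrDl; apply: le_trans (ler_normD _ _) _.
    by apply: lerD; [apply: nlC | apply: nlA].
  split.
    move=> c x; rewrite /rBb /B_norm mulrDl; apply: le_trans (ler_normD _ _) _.
    by apply: lerD; [apply: nrC | apply: nrA].
  split.
    move=> c d x; rewrite /lBb Bmul1 Bmul2 lC_D lC_D lC_Dr lA_Dr mlC mlA c2 c1.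
    by rewrite !addrA.
  split.
    move=> c d x; rewrite /rBb Bmul1 Bmul2 rC_D rC_D rC_Dl rA_Dl mrC mrA c4 c5.
    by rewrite !addrA (addrAC (rC (rC x c.1) d.1)).
  move=> c d x; rewrite /lBb /rBb rC_Dl rA_Dl lC_Dr lA_Dr midC c6 midA c3.
  by rewrite !addrA (addrAC (lC c.1 (rC x d.1))).
split; [by move=> al c x; rewrite /lBb Bactl1 Bactl2 lA_Dr c1 mlA|].
split; [by move=> al c x; rewrite /lBb Bactr1 Bactr2 c2 mlA|].
split; [by move=> al c x; rewrite /lBb rA_Dl c3 midA|].
split; [by move=> al c x; rewrite /rBb Bactr1 Bactr2 rA_Dl c4 mrA|].
split; [by move=> al c x; rewrite /rBb Bactl1 Bactl2 c5 mrA|].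
by move=> al c x; rewrite /rBb lA_Dr c6 midA.
Qed.

Lemma D_add a b x : D (a + b) x = D a x + D b x. Proof. exact: aD. Qed.

Lemma unorm_ge0 (u : unitz A) : 0 <= unitz_norm u.
Proof. by rewrite /unitz_norm addr_ge0. Qed.

Lemma hDB : module_derivation (B_norm (A:=A) (Ac:=Ac)) (B_mul mulA mulAc l r)
       (B_actl mulA l) (B_actr mulA r) lBb rBb lA rA (fun w => D w.1).
Proof.
split; [by move=> c; exact: dD|].
split; [by move=> c d x; rewrite -aD|].
split.
  case: bD => M HM; exists `|M| => c x.
  have h1 := HM c.1 x.
  have h2 : `|D c.1 x| <= `|M| * (`|c.1| * `|x|).
    by apply: bound_abs; rewrite ?mulr_ge0 // -mulrA in h1 *.
  apply: le_trans h2 _; rewrite -mulrA; apply: ler_wpM2l => //.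
  apply: ler_wpM2r => //; rewrite /B_norm lerDl; exact: unorm_ge0.
split.
  move=> c d x; rewrite Bmul1 D_add D_add mD alD arD /lBb /rBb.
  rewrite !(dualD (dD _)); ring.
split; [by move=> al c x; rewrite Bactl1 alD|].
by move=> al c x; rewrite Bactr1 arD.
Qed.

Lemma concl_bwd Pk : amen_conclusion Pk lBb rBb (fun w => D w.1) ->
  amen_conclusion Pk lC rC D.
Proof.
apply: (concl_sub (g := inA)) => c x /=.
- by rewrite /lBb (bilin_l0 blA) addr0.
- by rewrite /rBb (bilin_r0 brA) addr0.
- by [].
Qed.
End Bwd.

Lemma P1_bwd Pk : module_P Pk (B_norm (A:=A) (Ac:=Ac)) (B_mul mulA mulAc l r)
       (unitz_norm (A:=A)) (unitz_mul mulA) (B_actl mulA l) (B_actr mulA r) ->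
   module_P Pk Num.norm mulAc (unitz_norm (A:=A)) (unitz_mul mulA)
       (unitz_actl l) (unitz_actr r).
Proof.
move=> H X lC rC lA rA hX hcom D hD.
apply: (concl_bwd hX).
apply: H => //; [exact: hXB | exact: hDB].
Qed.

Lemma ua0_lin k (a b : A) : ((k *: a + b, 0) : unitz A) = k *: ((a, 0) : unitz A) + (b, 0).
Proof. by congr (_,_); rewrite /= scaler0 addr0. Qed.
Lemma unorm_a0 (a : A) : unitz_norm ((a, 0) : unitz A) = `|a|.
Proof. by rewrite /unitz_norm /= normr0 addr0. Qed.
Lemma uactl_a0 (al : A) c : unitz_actl l (al, 0) c = l al c.
Proof. by rewrite /unitz_actl /= scale0r addr0. Qed.
Lemma uactr_a0 (al : A) c : unitz_actr r c (al, 0) = r c al.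
Proof. by rewrite /unitz_actr /= scale0r addr0. Qed.

Lemma P2_bwd Pk : module_P Pk Num.norm mulAc Num.norm mulA l r ->
   module_P Pk Num.norm mulAc (unitz_norm (A:=A)) (unitz_mul mulA)
       (unitz_actl l) (unitz_actr r).
Proof.
move=> H X lC rC lA rA hX hcom D hD.
apply: (H X lC rC (fun a x => lA (a, 0) x) (fun x a => rA x (a, 0)) _ _ D).
- split; first exact: hX.1.
  split.
    have hA' := hX.2.1.
    split; [split => *; [by rewrite ua0_lin hA'.1.1 | exact: hA'.1.2]|].
    split; [split => *; [exact: hA'.2.1.1 | by rewrite ua0_lin hA'.2.1.2]|].
    split; [by move=> c x; rewrite -unorm_a0; apply: hA'.2.2.1|].
    split; [by move=> c x; rewrite -unorm_a0; apply: hA'.2.2.2.1|].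
    split; [by move=> c d x; rewrite -umul00 hA'.2.2.2.2.1|].
    split; [by move=> c d x; rewrite -umul00 hA'.2.2.2.2.2.1|].
    by move=> c d x; rewrite hA'.2.2.2.2.2.2.
  have c := hX.2.2.
  split; [by move=> al c0 x; rewrite c.1 uactl_a0|].
  split; [by move=> al c0 x; rewrite c.2.1 uactr_a0|].
  split; [by move=> al c0 x; rewrite c.2.2.1|].
  split; [by move=> al c0 x; rewrite c.2.2.2.1 uactr_a0|].
  split; [by move=> al c0 x; rewrite c.2.2.2.2.1 uactl_a0|].
  by move=> al c0 x; rewrite c.2.2.2.2.2.
- by move=> al x; apply: hcom.
- split; first exact: hD.1.
  split; first exact: hD.2.1.
  split; first exact: hD.2.2.1.
  split; first exact: hD.2.2.2.1.
  split; [by move=> al c x; rewrite -hD.2.2.2.2.1 uactl_a0|].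
  by move=> al c x; rewrite -hD.2.2.2.2.2 uactr_a0.
Qed.

Lemma dense_zero (phi : Ac -> K) (g : A -> Ac -> Ac) :
  (forall a b, phi (a + b) = phi a + phi b) ->
  (exists C, 0 <= C /\ forall c, `|phi c| <= C * `|c|) ->
  (forall (lam : K) al b, phi (lam *: g al b) = 0) ->
  (forall (a : Ac) (e : K), 0 < e -> exists (n : nat) (lam : 'I_n -> K) (al : 'I_n -> A)
      (b : 'I_n -> Ac), `|a - \sum_(i < n) lam i *: g (al i) (b i)| < e) ->
  forall c, phi c = 0.
Proof.
move=> hadd [C [C0 HC]] hg hden c.
have phi0 : phi 0 = 0.
  have := hadd 0 0; rewrite addr0 => /(congr1 (fun t => t - phi 0)).
  by rewrite subrr addrK => <-.
apply: small0 => e e0.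
have C1 : 0 < C + 1 by apply: lt_le_trans (ltr01) _; rewrite lerDr.
have e1 : 0 < e / (C + 1) by rewrite divr_gt0.
have [n [lam [al [b hb]]]] := hden c _ e1.
set s := \sum_(i < n) lam i *: g (al i) (b i) in hb.
have phis : phi s = 0.
  rewrite /s; apply: (big_ind (fun t => phi t = 0)) => //.
  by move=> x y hx hy; rewrite hadd hx hy addr0.
have -> : phi c = phi (c - s) by rewrite -[phi (c - s)]addr0 -phis -hadd subrK.
apply: le_trans (HC _) _.
apply: le_trans (_ : (C + 1) * `|c - s| <= _).
  by apply: ler_wpM2r => //; rewrite lerDl.
have -> : e = (C + 1) * (e / (C + 1)) by rewrite mulrC divfK // gt_eqF.
by apply: ler_wpM2l; [exact: ltW | exact: ltW].
Qed.

Lemma uZD1 k (u v : unitz A) : (k *: u + v).1 = k *: u.1 + v.1. Proof. by []. Qed.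
Lemma uZD2 k (u v : unitz A) : ((k *: u + v).2 : K) = k * u.2 + v.2. Proof. by []. Qed.
Lemma umul1 (u v : unitz A) : (unitz_mul mulA u v).1 = mulA u.1 v.1 + u.2 *: v.1 + v.2 *: u.1.
Proof. by []. Qed.
Lemma umul2 (u v : unitz A) : ((unitz_mul mulA u v).2 : K) = u.2 * v.2. Proof. by []. Qed.

Section Ext.
Variables (X : completeNormedModType K) (lC : Ac -> X -> X) (rC : X -> Ac -> X)
  (lA : A -> X -> X) (rA : X -> A -> X).
Hypothesis hX : banach_CA_module Num.norm mulAc Num.norm mulA l r lC rC lA rA.
Hypothesis hcom : commutative_module lA rA.
Variable D : Ac -> X -> K.
Hypothesis hD : module_derivation Num.norm mulAc l r lC rC lA rA D.
Hypothesis hess : left_essential l \/ right_essential r.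

Let blC : bilin lC := hX.1.1.
Let brC : bilin rC := hX.1.2.1.
Let blA : bilin lA := hX.2.1.1.
Let brA : bilin rA := hX.2.1.2.1.
Let nlA := hX.2.1.2.2.1.
Let nrA := hX.2.1.2.2.2.1.
Let mlA := hX.2.1.2.2.2.2.1.
Let mrA := hX.2.1.2.2.2.2.2.1.
Let midA := hX.2.1.2.2.2.2.2.2.
Let c1 := hX.2.2.1.
Let c2 := hX.2.2.2.1.
Let c3 := hX.2.2.2.2.1.
Let c4 := hX.2.2.2.2.2.1.
Let c5 := hX.2.2.2.2.2.2.1.
Let c6 := hX.2.2.2.2.2.2.2.
Let dD := hD.1.
Let aD := hD.2.1.
Let bD := hD.2.2.1.
Let alD := hD.2.2.2.2.1.
Let arD := hD.2.2.2.2.2.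

Lemma Dbound : exists M, 0 <= M /\ forall c x, `|D c x| <= M * (`|c| * `|x|).
Proof.
case: bD => M HM; exists `|M|; split => // c x.
have h := HM c x; rewrite -mulrA in h.
by apply: bound_abs => //; apply: mulr_ge0.
Qed.

Lemma Dhom k c x : D (k *: c) x = k * D c x.
Proof.
pose phi c := D (k *: c) x - k * D c x.
suff : phi c = 0 by move/eqP; rewrite subr_eq0 => /eqP.
have hadd : forall a b, phi (a + b) = phi a + phi b.
  by move=> a b; rewrite /phi scalerDr !aD; ring.
have hb : exists C, 0 <= C /\ forall c, `|phi c| <= C * `|c|.
  have [M [M0 HM]] := Dbound.
  exists (M * `|k| * `|x| + `|k| * (M * `|x|)); split.
    by rewrite addr_ge0 // !mulr_ge0.
  move=> c0; rewrite /phi; apply: le_trans (ler_normB _ _) _.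
  rewrite mulrDl; apply: lerD.
    by apply: le_trans (HM _ _) _; rewrite normrZ le_eqVlt; apply/orP; left; apply/eqP; ring.
  rewrite normrM; apply: le_trans (_ : `|k| * (M * (`|c0| * `|x|)) <= _).
    by apply: ler_wpM2l => //.
  by rewrite le_eqVlt; apply/orP; left; apply/eqP; ring.
case: hess => [hl | hr].
- apply: (dense_zero (g := l)) => //.
  move=> lam al b; rewrite /phi scalerA -!(bilin_lZ bl) !alD !(bilin_rZ brA).
  by rewrite !(dualZ (dD _)); ring.
- apply: (dense_zero (g := fun al b => r b al)) => //.
  move=> lam al b; rewrite /phi scalerA -!(bilin_rZ br) !arD !(bilin_lZ blA).
  by rewrite !(dualZ (dD _)); ring.
Qed.

Definition lAe (u : unitz A) (x : X) : X := lA u.1 x + u.2 *: x.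
Definition rAe (x : X) (u : unitz A) : X := rA x u.1 + u.2 *: x.

Lemma scaleC (a b : K) (v : X) : a *: (b *: v) = b *: (a *: v).
Proof. by rewrite !scalerA mulrC. Qed.

Lemma hXE : banach_CA_module Num.norm mulAc (unitz_norm (A:=A)) (unitz_mul mulA)
   (unitz_actl l) (unitz_actr r) lC rC lAe rAe.
Proof.
split; first exact: hX.1.
split.
  split.
    split => k u u' v; rewrite /lAe.
      by rewrite uZD1 uZD2 blA.1 scalerDl -scalerA scalerDr addrACA.
    by rewrite blA.2 !scalerDr (scaleC u.2 k) addrACA.
  split.
    split => k u u' v; rewrite /rAe.
      by rewrite brA.1 !scalerDr (scaleC v.2 k) addrACA.
    by rewrite uZD1 uZD2 brA.2 scalerDl -scalerA scalerDr addrACA.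
  split.
    move=> c x; rewrite /lAe /unitz_norm mulrDl; apply: le_trans (ler_normD _ _) _.
    by apply: lerD; [apply: nlA | rewrite normrZ].
  split.
    move=> c x; rewrite /rAe /unitz_norm mulrDl; apply: le_trans (ler_normD _ _) _.
    by apply: lerD; [apply: nrA | rewrite normrZ].
  split.
    move=> u v x; rewrite /lAe umul1 umul2 !(bilin_lD blA) !(bilin_lZ blA) mlA.
    rewrite (bilin_rD blA) (bilin_rZ blA) scalerDr scalerA !addrA.
    by rewrite (addrAC (lA u.1 (lA v.1 x))).
  split.
    move=> u v x; rewrite /rAe umul1 umul2 !(bilin_rD brA) !(bilin_rZ brA) mrA.
    rewrite (bilin_lD brA) (bilin_lZ brA) scalerDr scalerA !addrA.
    by rewrite (mulrC v.2).
  move=> u v x; rewrite /lAe /rAe.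
  rewrite (bilin_lD brA) (bilin_lZ brA) (bilin_rD blA) (bilin_rZ blA) !scalerDr midA !addrA.
  by rewrite (addrAC (lA u.1 (rA x v.1))) (scaleC v.2).
split.
  by move=> al c x; rewrite /lAe /unitz_actl (bilin_lD blC) (bilin_lZ blC) c1.
split.
  move=> al c x; rewrite /lAe /unitz_actr (bilin_lD blC) (bilin_lZ blC).
  by rewrite (bilin_rD blC) (bilin_rZ blC) c2.
split.
  move=> al c x; rewrite /rAe (bilin_rD blC) (bilin_rZ blC) c3.
  by [].
split.
  move=> al c x; rewrite /rAe /unitz_actr (bilin_rD brC) (bilin_rZ brC) c4.
  by [].
split.
  move=> al c x; rewrite /rAe /unitz_actl (bilin_rD brC) (bilin_rZ brC).
  by rewrite (bilin_lD brC) (bilin_lZ brC) c5.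
move=> al c x; rewrite /lAe (bilin_lD brC) (bilin_lZ brC) c6.
by [].
Qed.

Lemma hcomE : commutative_module lAe rAe.
Proof. by move=> al x; rewrite /lAe /rAe hcom. Qed.

Lemma hDE : module_derivation Num.norm mulAc (unitz_actl l) (unitz_actr r)
   lC rC lAe rAe D.
Proof.
split; first exact: dD.
split; first exact: aD.
split; first exact: bD.
split; first exact: hD.2.2.2.1.
split.
  move=> al c x; rewrite /unitz_actl /rAe aD alD Dhom.
  by rewrite (dualD (dD _)) (dualZ (dD _)).
move=> al c x; rewrite /unitz_actr /lAe aD arD Dhom.
by rewrite (dualD (dD _)) (dualZ (dD _)).
Qed.

End Ext.

Lemma P2_fwd Pk : left_essential l \/ right_essential r ->
   module_P Pk Num.norm mulAc (unitz_norm (A:=A)) (unitz_mul mulA)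
       (unitz_actl l) (unitz_actr r) ->
   module_P Pk Num.norm mulAc Num.norm mulA l r.
Proof.
move=> hess H X lC rC lA rA hX hcom D hD.
apply: (H X lC rC (lAe lA) (rAe rA) _ _ D).
- exact: hXE.
- exact: hcomE.
- exact: hDE.
Qed.
End Main.

Unset Implicit Arguments.

Theorem theorem3p1 (R : realType)
    (A : completeNormedModType (complex R)) (mulA : A -> A -> A)
    (Ac : completeNormedModType (complex R)) (mulAc : Ac -> Ac -> Ac)
    (l : A -> Ac -> Ac) (r : Ac -> A -> Ac)
    (hA : banach_algebra mulA) (hAc : banach_algebra mulAc)
    (hmod : banach_bimodule Num.norm mulA l r)
    (hcomp : compatible_actions mulAc l r)
    (P : amen_kind) :
  (module_P P Num.norm mulAc (unitz_norm (A:=A)) (unitz_mul mulA)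
       (unitz_actl l) (unitz_actr r)
   <->
   module_P P (B_norm (A:=A) (Ac:=Ac)) (B_mul mulA mulAc l r)
       (unitz_norm (A:=A)) (unitz_mul mulA)
       (B_actl mulA l) (B_actr mulA r)) /\
  (left_essential l \/ right_essential r ->
   (module_P P Num.norm mulAc (unitz_norm (A:=A)) (unitz_mul mulA)
       (unitz_actl l) (unitz_actr r)
    <->
    module_P P Num.norm mulAc Num.norm mulA l r)).
Proof.
split; first split.
- by apply: P1_fwd.
- by apply: P1_bwd.
- move=> hess; split.
  + by apply: P2_fwd.
  + by apply: P2_bwd.
Qed.
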